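(* If a formula $\varphi$ is satisfiable in a Bochvar-Kripke model, then it is satisfiable in a Bochvar-Kripke model $(W,R,v)$ with $W$ finite.
   Context: Formulas are built from a countably infinite set of propositional variables and the constants $0,1$ using the unary connectives $\neg$, $J_2$, $\Box$ and the binary connective $\vee$. Let $\mathbf{WK}^e$ be the algebra on $\{0,\tfrac12,1\}$ with $\neg0=1$, $\neg1=0$, $\neg\tfrac12=\tfrac12$; $a\vee b=\tfrac12$ if $a=\tfrac12$ or $b=\tfrac12$, otherwise $a\vee b=\max(a,b)$; $J_2(1)=1$, $J_2(\tfrac12)=J_2(0)=0$. A Bochvar-Kripke model is a triple $(W,R,v)$ with $W\neq\emptyset$, $R\subseteq W\times W$, $v:W\times\mathrm{Fm}\to\{0,\tfrac12,1\}$ such that for each $w$, $v(w,\cdot)$ commutes with $\neg,\vee,J_2,0,1$ as computed in $\mathbf{WK}^e$, and: $v(w,\Box\varphi)=\tfrac12$ iff $v(w,\varphi)=\tfrac12$; $v(w,\Box\varphi)=1$ iff $v(w,\varphi)\neq\tfrac12$ and $v(s,\varphi)=1$ for all $s$ with $wRs$; $v(w,\Box\varphi)=0$ iff $v(w,\varphi)\neq\tfrac12$ and $v(s,\varphi)\neq1$ for some $s$ with $wRs$. A formula $\varphi$ is satisfiable in a model $(W,R,v)$ if $v(w,\varphi)=1$ for some $w\in W$. *)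

(* Defs.v *)
From Stdlib Require Import List.

Inductive form : Type :=
| Var : nat -> form
| Bot : form
| Top : form
| Neg : form -> form
| J2  : form -> form
| Box : form -> form
| Vee : form -> form -> form.

Inductive tv : Type := T0 | Thalf | T1.

Definition wk_neg (a : tv) : tv :=
  match a with T0 => T1 | Thalf => Thalf | T1 => T0 end.

Definition wk_vee (a b : tv) : tv :=
  match a, b with
  | Thalf, _ => Thalf
  | _, Thalf => Thalf
  | T1, _ => T1
  | _, T1 => T1
  | T0, T0 => T0
  end.

Definition wk_J2 (a : tv) : tv :=
  match a with T1 => T1 | _ => T0 end.

Record BKmodel (W : Type) (R : W -> W -> Prop) (v : W -> form -> tv) : Prop := {
  bk_nonempty : inhabited W;
  bk_bot  : forall w, v w Bot = T0;
  bk_top  : forall w, v w Top = T1;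
  bk_neg  : forall w f, v w (Neg f) = wk_neg (v w f);
  bk_vee  : forall w f g, v w (Vee f g) = wk_vee (v w f) (v w g);
  bk_J2   : forall w f, v w (J2 f) = wk_J2 (v w f);
  bk_box_half : forall w f, v w (Box f) = Thalf <-> v w f = Thalf;
  bk_box_one  : forall w f, v w (Box f) = T1 <->
                  (v w f <> Thalf /\ forall s, R w s -> v s f = T1);
  bk_box_zero : forall w f, v w (Box f) = T0 <->
                  (v w f <> Thalf /\ exists s, R w s /\ v s f <> T1)
}.

Definition satisfiable_in (W : Type) (v : W -> form -> tv) (phi : form) : Prop :=
  exists w : W, v w phi = T1.

Definition finite_type (W : Type) : Prop :=
  exists l : list W, forall w : W, In w l.

(* Main.v *)
Require Import Defs.
From Stdlib Require Import List.
From Stdlib Require Import Classical ClassicalEpsilon ProofIrrelevance.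
Import ListNotations.

Definition dec (P : Prop) : {P} + {~ P} := excluded_middle_informative P.

Fixpoint ev {W : Type} (R : W -> W -> Prop) (val : W -> nat -> tv) (f : form) (w : W) {struct f} : tv :=
  match f with
  | Var p => val w p
  | Bot => T0
  | Top => T1
  | Neg g => wk_neg (ev R val g w)
  | J2 g => wk_J2 (ev R val g w)
  | Vee g h => wk_vee (ev R val g w) (ev R val h w)
  | Box g => match ev R val g w with
             | Thalf => Thalf
             | _ => if dec (forall s, R w s -> ev R val g s = T1) then T1 else T0
             end
  end.

Lemma ev_model (W : Type) (R : W -> W -> Prop) (val : W -> nat -> tv) :
  inhabited W -> BKmodel W R (fun w f => ev R val f w).
Proof.
  intros H; constructor; auto; intros w f; simpl.
  - destruct (ev R val f w); try destruct (dec _); split; intro; congruence.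
  - destruct (ev R val f w); try destruct (dec _) as [Hd|Hd]; split; intro H';
      try discriminate; try (split; [discriminate|exact Hd]);
      try (destruct H' as [H1 H2]; congruence).
    all: destruct H' as [H1 H2]; contradiction.
  - destruct (ev R val f w); try destruct (dec _) as [Hd|Hd]; split; intro H';
      try discriminate; try (destruct H' as [H1 H2]; congruence).
    + destruct H' as [_ [s [Hs Hn]]]. exfalso; apply Hn, Hd, Hs.
    + split; [discriminate|]. apply not_all_ex_not in Hd. destruct Hd as [s Hs].
      exists s. apply imply_to_and in Hs. exact Hs.
    + destruct H' as [_ [s [Hs Hn]]]. exfalso; apply Hn, Hd, Hs.
    + split; [discriminate|]. apply not_all_ex_not in Hd. destruct Hd as [s Hs].
      exists s. apply imply_to_and in Hs. exact Hs.
Qed.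

Fixpoint sub (f : form) : list form :=
  f :: match f with
       | Neg g | J2 g | Box g => sub g
       | Vee g h => sub g ++ sub h
       | _ => []
       end.

Lemma sub_self f : In f (sub f).
Proof. destruct f; simpl; auto. Qed.

Lemma sub_trans f g : In g (sub f) -> incl (sub g) (sub f).
Proof.
  induction f; simpl; intros [E|H]; subst; try apply incl_refl; try contradiction;
  try (intros x Hx; right; apply IHf; assumption).
  apply in_app_or in H; destruct H as [H|H]; intros x Hx; right; apply in_or_app;
    [left; apply IHf1 | right; apply IHf2]; auto.
Qed.

Definition Wq {W : Type} (v : W -> form -> tv) (S : list form) : Type :=
  {l : list tv | exists w, l = map (v w) S}.

Definition rep {W : Type} (v : W -> form -> tv) (S : list form) (x : Wq v S) : W :=
  proj1_sig (constructive_indefinite_description _ (proj2_sig x)).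

Lemma rep_spec {W : Type} (v : W -> form -> tv) (S : list form) (x : Wq v S) :
  proj1_sig x = map (v (rep v S x)) S.
Proof. unfold rep. destruct (constructive_indefinite_description _ _). simpl. exact e. Qed.

Definition Rq {W : Type} (R : W -> W -> Prop) (v : W -> form -> tv) (S : list form)
  (x y : Wq v S) : Prop :=
  exists w u, R w u /\ proj1_sig x = map (v w) S /\ proj1_sig y = map (v u) S.

Definition valq {W : Type} (v : W -> form -> tv) (S : list form) (x : Wq v S) (p : nat) : tv :=
  v (rep v S x) (Var p).

Lemma map_eq_in {A B : Type} (f g : A -> B) (l : list A) :
  map f l = map g l -> forall x, In x l -> f x = g x.
Proof.
  induction l; simpl; intros H x Hx; [contradiction|].
  injection H as H1 H2. destruct Hx; subst; auto.
Qed.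

Lemma truth {W : Type} (R : W -> W -> Prop) (v : W -> form -> tv) (S : list form) :
  BKmodel W R v ->
  (forall g, In g S -> incl (sub g) S) ->
  forall f, In f S -> forall (x : Wq v S) w, proj1_sig x = map (v w) S ->
    ev (Rq R v S) (valq v S) f x = v w f.
Proof.
  intros M Hcl f. induction f; intros Hin x w Hx; simpl.
  - unfold valq. apply (map_eq_in (v (rep v S x)) (v w) S); auto. rewrite <- rep_spec. auto.
  - symmetry; apply (bk_bot _ _ _ M).
  - symmetry; apply (bk_top _ _ _ M).
  - rewrite (bk_neg _ _ _ M). rewrite (IHf (Hcl _ Hin f ltac:(simpl; right; apply sub_self)) x w Hx); auto.
  - rewrite (bk_J2 _ _ _ M). rewrite (IHf (Hcl _ Hin f ltac:(simpl; right; apply sub_self)) x w Hx); auto.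
  - assert (Hg : In f S) by (apply (Hcl _ Hin); simpl; right; apply sub_self).
    rewrite (IHf Hg x w Hx).
    destruct (v w f) eqn:E.
    + destruct (dec _) as [Hd|Hd].
      * symmetry; apply (proj2 (bk_box_one _ _ _ M w f)). split; [congruence|].
        intros s Hs.
        set (y := exist (fun l => exists w, l = map (v w) S) (map (v s) S) (ex_intro _ s eq_refl) : Wq v S).
        rewrite <- (IHf Hg y s eq_refl). apply Hd. exists w, s. auto.
      * symmetry. destruct (v w (Box f)) eqn:E2; auto; exfalso.
        -- apply (proj1 (bk_box_half _ _ _ M w f)) in E2. congruence.
        -- apply Hd. intros y [w' [u' [Hr [H1 H2]]]].
           rewrite (IHf Hg y u' H2).
           assert (v w' (Box f) = T1).
           { rewrite <- E2. apply (map_eq_in _ _ S); auto. congruence. }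
           apply (bk_box_one _ _ _ M) in H. destruct H. auto.
    + symmetry; apply (bk_box_half _ _ _ M); auto.
    + destruct (dec _) as [Hd|Hd].
      * symmetry; apply (proj2 (bk_box_one _ _ _ M w f)). split; [congruence|].
        intros s Hs.
        set (y := exist (fun l => exists w, l = map (v w) S) (map (v s) S) (ex_intro _ s eq_refl) : Wq v S).
        rewrite <- (IHf Hg y s eq_refl). apply Hd. exists w, s. auto.
      * symmetry. destruct (v w (Box f)) eqn:E2; auto; exfalso.
        -- apply (proj1 (bk_box_half _ _ _ M w f)) in E2. congruence.
        -- apply Hd. intros y [w' [u' [Hr [H1 H2]]]].
           rewrite (IHf Hg y u' H2).
           assert (v w' (Box f) = T1).
           { rewrite <- E2. apply (map_eq_in _ _ S); auto. congruence. }
           apply (bk_box_one _ _ _ M) in H. destruct H. auto.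
  - rewrite (bk_vee _ _ _ M). rewrite (IHf1 ltac:(apply (Hcl _ Hin); simpl; right; apply in_or_app; left; apply sub_self) x w Hx), (IHf2 ltac:(apply (Hcl _ Hin); simpl; right; apply in_or_app; right; apply sub_self) x w Hx); auto.
Qed.

Fixpoint all_lists (n : nat) : list (list tv) :=
  match n with
  | 0 => [[]]
  | S n => flat_map (fun l => [T0 :: l; Thalf :: l; T1 :: l]) (all_lists n)
  end.

Lemma all_lists_spec l : In l (all_lists (length l)).
Proof.
  induction l; simpl; auto.
  apply in_flat_map. exists l. split; auto. destruct a; simpl; auto.
Qed.

Lemma Wq_finite {W : Type} (v : W -> form -> tv) (S : list form) : finite_type (Wq v S).
Proof.
  exists (flat_map (fun l => match dec (exists w, l = map (v w) S) with
                             | left p => [exist _ l p]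
                             | right _ => [] end) (all_lists (length S))).
  intros [l p]. apply in_flat_map. exists l. split.
  - destruct p as [w Hw]. subst. rewrite <- (length_map (v w) S). apply all_lists_spec.
  - destruct (dec _) as [p'|n]; [|contradiction].
    rewrite (proof_irrelevance _ p p'). simpl; auto.
Qed.

Theorem mainTheorem6 (phi : form) :
  (exists (W : Type) (R : W -> W -> Prop) (v : W -> form -> tv),
      BKmodel W R v /\ satisfiable_in W v phi) ->
  exists (W : Type) (R : W -> W -> Prop) (v : W -> form -> tv),
      BKmodel W R v /\ finite_type W /\ satisfiable_in W v phi.
Proof.
  intros [W [R [v [M [w0 Hw0]]]]].
  set (S := sub phi).
  set (x0 := exist (fun l => exists w, l = map (v w) S) (map (v w0) S) (ex_intro _ w0 eq_refl) : Wq v S).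
  exists (Wq v S), (Rq R v S), (fun x f => ev (Rq R v S) (valq v S) f x).
  split; [apply ev_model; exact (inhabits x0)|].
  split; [apply Wq_finite|].
  exists x0. rewrite (truth R v S M) with (w := w0); auto.
  - intros g Hg. apply sub_trans. exact Hg.
  - apply sub_self.
Qed.
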